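(* Work on the event that, for every level $m\in\{1,\dots,\overline m_T\}$ introduced by the GSR algorithm, the batch generated when level $m$ was introduced contains a task $i_m$ with $U^\star-U^{(i_m)}\le\epsilon^U_m$. Define $U^{\max}_t:=\max_{i\in\mathcal I_t}U^{(i)}$ and let $m_t$ be the algorithm's level at round $t$. Then for every $t$, $$U^\star-U^{\max}_t\le\epsilon^U_{\min\{m_t,m^\star\}}.$$ In particular $U^\star-U^{\max}_t\le\epsilon^U_{m_t}$ before level $m^\star$ is reached, and $U^\star-U^{\max}_t\le\epsilon^U_{m^\star}$ at all rounds after level $m^\star$ is introduced.
   Context: Tasks have long-run values $U^{(i)}\in[0,1]$, $U^\star:=\sup_iU^{(i)}$; $\epsilon^U_m:=\epsilon^U_02^{-m}$ with $\epsilon^U_0=1$. The GSR algorithm maintains a set $\mathcal I_t$ of instantiated tasks (tasks are only added, never removed) and a nondecreasing level counter $m_t\in\{0,\dots,\overline m_T\}$ starting at $0$; each time the level increases to $m$ a batch of new tasks is added to the set. $m^\star\in\{0,\dots,\overline m_T\}$ is a fixed target level. *)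

(* Defs.v *)
From HB Require Import structures.
From mathcomp Require Import all_boot all_order all_algebra.
From mathcomp Require Import all_classical all_reals.
Set Implicit Arguments. Unset Strict Implicit. Unset Printing Implicit Defensive.
Import Order.TTheory GRing.Theory Num.Theory.
Local Open Scope ring_scope.
Local Open Scope classical_set_scope.

Definition Ustar {R : realType} {I : Type} (U : I -> R) : R := sup (range U).

(* eps^U_m := eps^U_0 * 2^{-m}, with eps^U_0 = 1 *)
Definition epsU {R : realType} (m : nat) : R := (2 ^+ m)^-1.

Definition Umax {R : realType} {I : eqType} (U : I -> R) (It : seq I) : R :=
  sup [set U i | i in [set j | j \in It]].

(* Main.v *)
Require Import Defs.
From HB Require Import structures.
From mathcomp Require Import all_boot all_order all_algebra.
From mathcomp Require Import all_classical all_reals.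
Import Order.TTheory GRing.Theory Num.Theory.
Local Open Scope ring_scope.
Lemma batch_in (I : eqType) (It : nat -> seq I) (m : nat -> nat) (Batch : nat -> seq I) :
  m 0%N = 0%N ->
  (forall t, m t.+1 = m t \/ m t.+1 = (m t).+1) ->
  (forall t, {subset It t <= It t.+1}) ->
  (forall t, m t.+1 = (m t).+1 -> {subset Batch (m t.+1) <= It t.+1}) ->
  forall t l, (1 <= l <= m t)%N -> {subset Batch l <= It t}.
Proof.
move=> m0 mstep Itsub Bsub; elim=> [|t IH] l.
  by rewrite m0; case/andP=> /leq_trans H /H.
case/andP=> l1 lm x xB; case: (mstep t) => E.
  by apply: Itsub; apply: (IH l) => //; rewrite l1 -E.
have [lt|ge] := ltnP l (m t.+1).
  by apply: Itsub; apply: (IH l) => //; rewrite l1 -ltnS -E.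
have El : l = m t.+1 by apply/eqP; rewrite eqn_leq lm ge.
rewrite El in xB; exact: (Bsub t E).
Qed.

Lemma It_nonempty (I : eqType) (It : nat -> seq I) :
  It 0%N != [::] -> (forall t, {subset It t <= It t.+1}) ->
  forall t, exists i, i \in It t.
Proof.
move=> H0 Hs; elim=> [|t [i Hi]].
  by case: (It 0%N) H0 => [//|a s] _; exists a; rewrite inE eqxx.
by exists i; apply: Hs.
Qed.

Theorem lemmaC20 (R : realType) (I : eqType) (U : I -> R)
  (mbar mstar : nat) (It : nat -> seq I) (m : nat -> nat) (Batch : nat -> seq I) :
  (forall i, 0 <= U i <= 1) ->
  (mstar <= mbar)%N ->
  m 0%N = 0%N ->
  (forall t, (m t <= mbar)%N) ->
  (forall t, m t.+1 = m t \/ m t.+1 = (m t).+1) ->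
  It 0%N != [::] ->
  (forall t, {subset It t <= It t.+1}) ->
  (forall t, m t.+1 = (m t).+1 -> {subset Batch (m t.+1) <= It t.+1}) ->
  (forall l, (1 <= l <= mbar)%N ->
     exists2 i, i \in Batch l & Ustar U - U i <= epsU l) ->
  forall t, Ustar U - Umax U (It t) <= epsU (minn (m t) mstar).
Proof.
move=> U01 msb m0 mle mstep It0 Itsub Bsub good t.
have Umax_ge : forall i, i \in It t -> U i <= Umax U (It t).
  move=> i Hi; apply: ub_le_sup.
    by exists 1 => _ [j _ <-]; case/andP: (U01 j).
  by exists i.
case: (@It_nonempty I It It0 Itsub t) => i0 Hi0.
have Ustar1 : Ustar U <= 1.
  apply: ge_sup; first by exists (U i0), i0.
  by move=> _ [j _ <-]; case/andP: (U01 j).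
set l := minn (m t) mstar.
have [l0|l1] := posnP l.
  rewrite l0 /epsU expr0 invr1.
  have := Umax_ge _ Hi0; case/andP: (U01 i0) => H _ H2.
  by rewrite lerBlDr; apply: (le_trans Ustar1); rewrite lerDl (le_trans H).
have lm : (1 <= l <= mbar)%N by rewrite l1 (leq_trans (geq_minr _ _)).
case: (good l lm) => i iB Hi.
have iIt : i \in It t.
  apply: (@batch_in I It m Batch m0 mstep Itsub Bsub t l) => //.
  by rewrite l1 geq_minl.
apply: le_trans Hi; rewrite lerD2l lerN2; exact: Umax_ge.
Qed.
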